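(* For any $h\in[1,k]$ and any $p\in\mathbb{N}$, the companion matrix $A=A(s)$ satisfies $$(-1)^{k-h}\frac{\partial A^p}{\partial s_h}=\frac{\partial A^p}{\partial s_k}A^{k-h}.$$
   Context: Fix an integer $k\ge 2$ and coordinates $s=(s_1,\dots,s_k)$ on $\mathbb{C}^k$. $A(s)$ is the $(k,k)$ companion matrix of $P_s(z)=\sum_{h=0}^k(-1)^hs_hz^{k-h}$ ($s_0=1$): its entries are $A_{i,i+1}=1$ for $i\in[1,k-1]$, its last row is $A_{k,j}=(-1)^{k-j}s_{k+1-j}$ for $j\in[1,k]$, and all other entries are $0$. *)

(* Defs.v *)
From mathcomp Require Import all_boot all_algebra all_field.
From mathcomp Require Import mpoly.
Set Implicit Arguments. Unset Strict Implicit. Unset Printing Implicit Defensive.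
Import GRing.Theory.
Local Open Scope ring_scope.

(* Coordinates s = (s_1,...,s_k) on C^k are the polynomial variables
   'X_j of {mpoly algC[k]}, with s_h = 'X_(h-1) (0-based index j = h-1). *)

(* The companion matrix A(s), 0-based indices: A i (i+1) = 1 for i < k-1,
   last row A (k-1) j = (-1)^(k-1-j) s_{k-j} = (-1)^(k-1-j) 'X_(k-1-j). *)
Definition companion (k : nat) : 'M[{mpoly algC[k]}]_k :=
  \matrix_(i < k, j < k)
    if i.+1 == k then (-1) ^+ (k.-1 - j) * 'X_(rev_ord j)
    else if j == i.+1 :> nat then 1 else 0.

Definition mxpow (R : pzRingType) (k : nat) (M : 'M[R]_k) (p : nat) : 'M[R]_k :=
  iter p (mulmx M) 1%:M.

Definition mxderiv (R : comNzRingType) (k : nat) (j : 'I_k) (M : 'M[{mpoly R[k]}]_k)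
  : 'M[{mpoly R[k]}]_k := map_mx (mderiv j) M.

Lemma ord_pred_lt (k : nat) (i : 'I_k) : (k.-1 < k)%N.
Proof. by case: k i => [[]|]. Qed.

Definition ord_last (k : nat) (i : 'I_k) : 'I_k := Ordinal (ord_pred_lt i).

(* Main.v *)
Require Import Defs.
From mathcomp Require Import all_boot all_algebra all_field.
From mathcomp Require Import mpoly.
Import GRing.Theory.
Local Open Scope ring_scope.

Lemma mderiv_Xi (K : nat) (i j : 'I_K) :
  mderiv j ('X_i : {mpoly algC[K]}) = (i == j)%:R.
Proof.
rewrite mderivX mnm1E; case: eqP => [->|_]; last by rewrite scale0r.
have -> : (U_(j) - U_(j))%MM = 0%MM by apply/mnmP => l; rewrite mnmBE subnn mnm0E.
by rewrite mpolyX0 scale1r.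
Qed.

Lemma mderiv_sgn (K : nat) (j : 'I_K) n (p : {mpoly algC[K]}) :
  mderiv j ((-1) ^+ n * p) = (-1) ^+ n * mderiv j p.
Proof.
rewrite -signr_odd; case: (odd n); rewrite ?expr1 ?expr0 ?mulN1r ?mul1r //.
by rewrite mderivN.
Qed.

Lemma mderiv_nat (K : nat) (j : 'I_K) (b : nat) :
  mderiv j (b%:R : {mpoly algC[K]}) = 0.
Proof. by rewrite -mpolyC_nat mderivC. Qed.

Lemma mxderiv_comp (K : nat) (j i l : 'I_K) : mxderiv j (companion K) i l
  = if i.+1 == K then (-1) ^+ (K.-1 - l) * (rev_ord l == j)%:R else 0.
Proof.
rewrite /mxderiv /companion !mxE; case: ifP => _.
  by rewrite mderiv_sgn mderiv_Xi.
by case: ifP => _; rewrite ?mderiv0 // -[1]/(1%:R) mderiv_nat.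
Qed.

Lemma mxpow_comp (K n : nat) (i j : 'I_K) : (i + n < K)%N ->
  mxpow (companion K) n i j = (j == (i + n)%N :> nat)%:R.
Proof.
elim: n i => [|n IH] i Hi.
  by rewrite /mxpow /= mxE addn0 eq_sym.
have Hi1 : (i.+1 < K)%N by rewrite -addn1 (leq_ltn_trans _ Hi) // leq_add2l.
rewrite /mxpow /= -/(mxpow _ n) mxE (bigD1 (Ordinal Hi1)) //= big1 ?addr0.
  rewrite /companion mxE (ltn_eqF Hi1) eqxx mul1r IH /=; last by rewrite addSnnS.
  by rewrite addSnnS.
move=> m Hm; rewrite /companion mxE (ltn_eqF Hi1).
case: eqP => [E|]; last by rewrite mul0r.
by case/eqP: Hm; apply: val_inj.
Qed.

Lemma mxpowD (R : pzRingType) K (M : 'M[R]_K) a b :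
  mxpow M (a + b) = mxpow M a *m mxpow M b.
Proof.
elim: a => [|a IH]; first by rewrite /mxpow /= mul1mx.
by rewrite addSn /mxpow /= -!/(mxpow _ _) IH mulmxA.
Qed.

Lemma mxpow_comm (R : pzRingType) K (M : 'M[R]_K) a b :
  mxpow M a *m mxpow M b = mxpow M b *m mxpow M a.
Proof. by rewrite -!mxpowD addnC. Qed.

Lemma mxderivM (K : nat) (j : 'I_K) (M N : 'M[{mpoly algC[K]}]_K) :
  mxderiv j (M *m N) = mxderiv j M *m N + M *m mxderiv j N.
Proof.
apply/matrixP => i l; rewrite /mxderiv !mxE raddf_sum -big_split /=.
by apply: eq_bigr => m _; rewrite mderivM !mxE.
Qed.

Lemma mxderiv1 (K : nat) (j : 'I_K) :
  mxderiv j (1%:M : 'M[{mpoly algC[K]}]_K) = 0.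
Proof.
by apply/matrixP => i l; rewrite /mxderiv !mxE mderiv_nat.
Qed.
From mathcomp Require Import zify.

Lemma key (K : nat) (h : 'I_K) :
  (-1) ^+ (K - h.+1) *: mxderiv h (companion K)
  = mxderiv (ord_last h) (companion K) *m mxpow (companion K) (K - h.+1).
Proof.
have K0 : (0 < K)%N by case: K h => [[]|].
have hK := ltn_ord h.
apply/matrixP => i l; rewrite [in LHS]mxE mxderiv_comp [in RHS]mxE.
case: ifP => Hi; last first.
  by rewrite mulr0 big1 // => m _; rewrite mxderiv_comp Hi mul0r.
rewrite (bigD1 (Ordinal K0)) //= big1 ?addr0; last first.
  move=> m Hm; rewrite mxderiv_comp Hi.
  have -> : (rev_ord m == ord_last h) = false.
    apply/negbTE/negP => /eqP E; case/negP: Hm; apply/eqP/val_inj => /=; move: E => /(congr1 val) /=; have := ltn_ord m; lia.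
  by rewrite mulr0 mul0r.
rewrite mxderiv_comp Hi mxpow_comp /=; last lia.
have -> : (rev_ord (Ordinal K0) == ord_last h) by rewrite -val_eqE /=; apply/eqP; lia.
have -> : (rev_ord l == h) = (l == (K - h.+1)%N :> nat).
  rewrite -val_eqE /=; have := ltn_ord l; move=> ?; apply/eqP/eqP; lia.
case: eqP => El; last by rewrite !mulr0.
rewrite /= !mulr1 -exprD El; congr (_ ^+ _); lia.
Qed.

Theorem mainTheorem6 (k : nat) (hk : (2 <= k)%N) (h : 'I_k) (p : nat) :
  (-1) ^+ (k - h.+1) *: mxderiv h (mxpow (companion k) p)
  = mxderiv (ord_last h) (mxpow (companion k) p) *m mxpow (companion k) (k - h.+1).
Proof.
elim: p => [|p IH]; first by rewrite /mxpow /= !mxderiv1 scaler0 mul0mx.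
rewrite /mxpow /= -!/(mxpow _ _) !mxderivM scalerDr scalemxAl key scalemxAr IH.
by rewrite mulmxDl -!mulmxA (@mxpow_comm _ _ _ (k - h.+1) p) !mulmxA.
Qed.
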